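(* There exist a constant $c>0$ and a family of graphs $\mathcal G$ (containing an $n$-vertex graph for infinitely many $n$) such that for every $n$-vertex graph $G\in\mathcal G$ and every $\rho\ge c/\log n$, every $\rho$-dense aggregator of $G$ has size $\Omega^*\big(n^{\frac{3\log n}{8\log\log n}}\big)$.
   Context: For a graph with $n'\ge 2$ vertices and $m'$ edges its density is $m'/\binom{n'}{2}$; a one-vertex graph has density $1$. A $\rho$-dense aggregator of a graph $G$ is a collection of nonempty vertex sets $S_1,\dots,S_k$ such that every clique of $G$ is contained in some $S_i$ and each induced subgraph $G[S_i]$ has density at least $\rho$; its size is $k$. The notation $\Omega^*(\cdot)$ hides multiplicative factors that are sublinear in $n$. Logarithms are base 2. *)

(* Defs.v *)
From mathcomp Require Import all_boot.
From Stdlib Require Import Reals.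

Set Implicit Arguments.
Unset Strict Implicit.
Unset Printing Implicit Defensive.

Definition simple_graph (n : nat) (e : rel 'I_n) : Prop :=
  symmetric e /\ irreflexive e.

Definition is_clique (n : nat) (e : rel 'I_n) (K : {set 'I_n}) : Prop :=
  forall x y, x \in K -> y \in K -> x != y -> e x y.

Definition induced_edges (n : nat) (e : rel 'I_n) (S : {set 'I_n}) : nat :=
  #|[set p : 'I_n * 'I_n | [&& p.1 \in S, p.2 \in S, (p.1 < p.2)%N & e p.1 p.2]]|.

(* Density of G[S]: m' / binom(n',2) if n' >= 2, and 1 otherwise
   (the paper defines it as 1 for one-vertex graphs; aggregator sets are
   nonempty, so the value on the empty set is irrelevant). *)
Definition density (n : nat) (e : rel 'I_n) (S : {set 'I_n}) : R :=
  if (2 <= #|S|)%N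
  then (INR (induced_edges e S) / INR 'C(#|S|, 2))%R
  else 1%R.

Definition dense_aggregator (n : nat) (e : rel 'I_n) (rho : R)
    (Ss : seq {set 'I_n}) : Prop :=
  (forall K, is_clique e K -> exists2 S, S \in Ss & K \subset S) /\
  (forall S, S \in Ss -> S != set0 /\ (rho <= density e S)%R).

Definition log2 (x : R) : R := (ln x / ln 2)%R.

(* Main.v *)
Require Import Defs.
From mathcomp Require Import all_boot.
From Stdlib Require Import Reals.
From Stdlib Require Import Lra.
From mathcomp Require Import zify.

Set Implicit Arguments. Unset Strict Implicit.

Lemma exp_pow_nat (x : R) (k : nat) : (exp x ^ k = exp (INR k * x))%R.
Proof.
elim: k => [|k IH]; first by rewrite /= Rmult_0_l exp_0.
rewrite [LHS]/=.
rewrite IH -exp_plus S_INR; f_equal; ring.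
Qed.

Lemma expn_Npow (m k : nat) : expn m k = Nat.pow m k.
Proof. elim: k => [|k IH] //; by rewrite expnS IH mulnE. Qed.

Lemma succ_pow_le (q : nat) : 0 < q -> (expn q.+1 q <= 3 * expn q q)%N.
Proof.
move=> q0; apply/leP; apply: INR_le.
rewrite !expn_Npow mulnE mult_INR !pow_INR.
have Hq : (0 < INR q)%R by apply: lt_0_INR; apply/ltP.
have -> : INR q.+1 = (INR q * (1 + / INR q))%R by rewrite S_INR; field; lra.
rewrite Rpow_mult_distr.
have H1 : ((1 + / INR q) ^ q <= 3)%R.
  have H0 : (0 <= 1 + / INR q <= exp (/ INR q))%R.
    split; last by apply: exp_ineq1_le.
    have : (0 < / INR q)%R by apply: Rinv_0_lt_compat. lra.
  apply: Rle_trans (pow_incr _ _ q H0) _.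
  rewrite exp_pow_nat.
  have -> : (INR q * / INR q = 1)%R by field; lra.
  exact: exp_le_3.
have H2 : (0 <= INR q ^ q)%R by apply: pow_le; lra.
have -> : INR 3 = 3%R by simpl; ring.
nra.
Qed.


Unset Implicit Arguments. Set Strict Implicit.
Module Comb.
Import all_boot.
Set Implicit Arguments. Unset Strict Implicit. Unset Printing Implicit Defensive.
Lemma expn_monol (m k e : nat) : m <= k -> m ^ e <= k ^ e.
Proof. move=> mk; elim: e => [|e IH]; rewrite ?expn0 // !expnS; exact: leq_mul. Qed.

Lemma succ_pow_le_r (q r : nat) : 0 < q -> r <= q -> (q.+1 ^ r <= 3 * q ^ r)%N.
Proof.
move=> q0 rq.
have H := succ_pow_le q0.
have E : q = r + (q - r) by lia.
have H2 : q.+1 ^ r * q ^ (q - r) <= 3 * q ^ r * q ^ (q - r).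
  apply: (@leq_trans (q.+1 ^ r * q.+1 ^ (q - r))).
    by apply: leq_mul => //; apply: expn_monol.
  by rewrite -expnD -E -mulnA -expnD -E.
rewrite leq_pmul2r // in H2; by rewrite expn_gt0 q0.
Qed.

Lemma succ_pow_ar (q a r : nat) : 0 < q -> r <= q ->
  q.+1 ^ (a * q + r) <= 3 ^ a.+1 * q ^ (a * q + r).
Proof.
move=> q0 rq.
rewrite !expnD expnS.
have Hr := succ_pow_le_r q0 rq.
have Ha : q.+1 ^ (a * q) <= 3 ^ a * q ^ (a * q).
  rewrite mulnC !expnM -expnMn. apply: expn_monol. exact: succ_pow_le.
have := leq_mul Ha Hr.
move/leq_trans; apply. apply: eq_leq. lia.
Qed.

Lemma succ_pow_N (q N : nat) : 0 < q -> q.+1 ^ N <= 3 ^ (N %/ q).+1 * q ^ N.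
Proof.
move=> q0; have E := divn_eq N q.
have Hr : N %% q <= q by apply: ltnW; rewrite ltn_mod.
by have := @succ_pow_ar q (N %/ q) (N %% q) q0 Hr; rewrite -E.
Qed.


Section Gen.
Variables (T : finType) (q' : nat).
Local Notation q := q'.+1.
Implicit Types (f : {ffun T -> 'I_q}) (A P : {set T}).

Definition zeros f P := #|[set a in P | f a == ord0]|.
Definition allz f A := [forall a in A, f a == ord0].

Lemma prod_bool_forall f A :
  \prod_(a in A) nat_of_bool (f a == ord0) = allz f A.
Proof.
rewrite /allz; case: forall_inP => H.
  by rewrite big1 // => a /H ->.
move/forall_inPn: (negbT (introF forall_inP H)) => [a aA /negbTE fa].
by rewrite (bigD1 a) //= fa mul0n.
Qed.

Lemma gen A P : [disjoint A & P] ->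
  \sum_f allz f A * 2 ^ zeros f P =
  \prod_a (if a \in A then 1 else if a \in P then q.+1 else q).
Proof.
move=> dAP.
pose phi a (x : 'I_q) := (if a \in A then nat_of_bool (x == ord0) else 1) *
                          (if a \in P then 2 ^ (x == ord0) else 1).
transitivity (\prod_a \sum_(x : 'I_q) phi a x); last first.
  apply: eq_bigr => a _; rewrite /phi.
  case: ifP => aA.
    have aP : a \notin P by rewrite (disjointFr dAP).
    rewrite (negbTE aP) (bigD1 ord0) //= big1 // => x /negbTE ->; by rewrite muln1.
  case: ifP => aP.
    rewrite (bigD1 ord0) //= (eq_bigr (fun _ => 1)); last by move=> x /negbTE ->.
    rewrite sum1_card cardC1 card_ord /=. lia.
  by rewrite (eq_bigr (fun _ => 1)) // sum1_card card_ord.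
rewrite bigA_distr_bigA; apply: eq_bigr => f _.
rewrite big_split /= -(prod_bool_forall f A) -big_mkcond /=.
congr (_ * _); rewrite -big_mkcond /= -expn_sum; congr (2 ^ _).
rewrite /zeros -sum1_card big_mkcond /=. rewrite [RHS]big_mkcond /=.
apply: eq_bigr => a _; rewrite !inE; by case: (a \in P); case: (f a == ord0).
Qed.

Definition W0 A := \prod_a (if a \in A then 1 else q).

Lemma Zeq A : \sum_f allz f A = W0 A.
Proof.
have -> : W0 A = \prod_a (if a \in A then 1 else if a \in set0 then q.+1 else q).
  by apply: eq_bigr => a _; rewrite inE.
rewrite -(gen (P:=set0)); last by rewrite disjoint_sym; apply: eq_disjoint0 => x; rewrite inE.
apply: eq_bigr => f _; rewrite /zeros.
have -> : [set a in set0 | f a == ord0] = set0 by apply/setP => x; rewrite !inE.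
by rewrite cards0 muln1.
Qed.

Lemma gen_rel A P : [disjoint A & P] ->
  (\sum_f allz f A * 2 ^ zeros f P) * q ^ #|P| = q.+1 ^ #|P| * W0 A.
Proof.
move=> dAP; rewrite gen //= /W0.
rewrite (bigID (fun a => a \in P)) /= [in RHS](bigID (fun a => a \in P)) /=.
have E1 : \prod_(a | a \in P) (if a \in A then 1 else if a \in P then q.+1 else q) = q.+1 ^ #|P|.
  rewrite -prod_nat_const; apply: eq_bigr => a aP.
  by rewrite aP (disjointFl dAP aP).
have E2 : \prod_(a | a \in P) (if a \in A then 1 else q) = q ^ #|P|.
  rewrite -prod_nat_const; apply: eq_bigr => a aP.
  by rewrite (disjointFl dAP aP).
have E3 : \prod_(a | a \notin P) (if a \in A then 1 else if a \in P then q.+1 else q)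
        = \prod_(a | a \notin P) (if a \in A then 1 else q).
  by apply: eq_bigr => a /negbTE ->.
rewrite E1 E2 E3. lia.
Qed.

Lemma W0_card A : W0 A * q ^ #|A| = q ^ #|T|.
Proof.
rewrite /W0 (bigID (fun a => a \in A)) /=.
rewrite big1; last by move=> a ->.
rewrite (eq_bigr (fun _ => q)); last by move=> a /negbTE ->.
rewrite prod_nat_const mul1n -expnD.
rewrite addnC -(cardsC A) cardsE; congr (q ^ (_ + _)); apply: eq_card => x; rewrite !inE.
Qed.

End Gen.



Lemma expn_monol' (m k e : nat) : m <= k -> m ^ e <= k ^ e.
Proof. move=> mk; elim: e => [|e IH]; rewrite ?expn0 // !expnS; exact: leq_mul. Qed.

Lemma ffact_le_exp (n k : nat) : n ^_ k <= n ^ k.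
Proof.
elim: k n => [|k IH] n; first by rewrite ffactn0 expn0.
rewrite ffactnS expnS leq_mul2l; apply/orP; right.
apply: leq_trans (IH _) _. apply: expn_monol'. exact: leq_pred.
Qed.

Lemma bin_le_exp (n k : nat) : 'C(n, k) <= n ^ k.
Proof.
apply: leq_trans (ffact_le_exp n k).
rewrite -bin_ffact. by apply: leq_pmulr; apply: fact_gt0.
Qed.


Lemma ind_pow (m z : nat) : (m <= z) * 2 ^ m <= 2 ^ z.
Proof. have [H|H] := leqP m z; rewrite ?mul1n ?mul0n //; by apply: leq_pexp2l. Qed.

Section Core.
Variables (n q' t B s : nat) (v : 'I_t -> 'I_B -> 'I_n) (thr : nat -> nat).
Local Notation q := q'.+1.
Local Notation D := ('I_n * 'I_n)%type.
Local Notation Omega := {ffun D -> 'I_q}.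

Definition key (x y : 'I_n) : D := if x < y then (x, y) else (y, x).
Definition gedge (f : Omega) : rel 'I_n :=
  fun x y => (x != y) && (f (key x y) == ord0).
Definition LT := [set p : 'I_t * 'I_t | p.1 < p.2].
Definition Ag (g : {ffun 'I_t -> 'I_B}) : {set D} :=
  [set key (v p.1 (g p.1)) (v p.2 (g p.2)) | p in LT].
Definition PS (S : {set 'I_n}) : {set D} :=
  [set p : D | (p.1 \in S) && (p.2 \in S) && (p.1 < p.2)].
Definition bad (f : Omega) :=
  [exists S : {set 'I_n}, (s < #|S|) && (thr #|S| <= zeros f (PS S))].

Lemma PS_card S : #|PS S| <= #|S| * #|S|.
Proof.
rewrite -cardsX; apply: subset_leq_card; apply/subsetP => [[x y]].
by rewrite !inE /= => /andP [/andP [-> ->] _].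
Qed.

Lemma zeros_diff (f : Omega) (P A : {set D}) : zeros f P <= zeros f (P :\: A) + #|A|.
Proof.
rewrite /zeros; apply: leq_trans (leq_card_setU _ _).
apply: subset_leq_card; apply/subsetP => a; rewrite !inE.
by case: (a \in A) => //= ->.
Qed.

Lemma Ag_card g : #|Ag g| <= #|LT|.
Proof. exact: leq_imset_card. Qed.

Definition Ycond (g : {ffun 'I_t -> 'I_B}) (S : {set 'I_n}) (f : Omega) : bool :=
  allz f (Ag g) && (thr #|S| - #|LT| <= zeros f (PS S :\: Ag g)).

Hypothesis n0 : 0 < n.
Hypothesis B0 : 0 < B.
Hypothesis Hthr : forall k, s < k -> k <= n ->
  2 * n.+1 * n ^ k * 3 ^ ((k * k) %/ q).+1 <= 2 ^ (thr k - #|LT|).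

Lemma Y_bound g (S : {set 'I_n}) : s < #|S| ->
  (\sum_(f : Omega) Ycond g S f) * (2 * n.+1 * n ^ #|S|) <= W0 q' (Ag g).
Proof.
move=> sS.
set k := #|S|; set m := thr k - #|LT|.
set A := Ag g; set P := PS S :\: A.
have kn : k <= n by rewrite /k; apply: leq_trans (max_card _) _; rewrite card_ord.
have dAP : [disjoint A & P].
  rewrite -setI_eq0; apply/eqP/setP => a; rewrite !inE.
  by case: (a \in A); rewrite ?andbF.
have H1 : (\sum_(f : Omega) Ycond g S f) * 2 ^ m <= \sum_(f : Omega) allz f A * 2 ^ zeros f P.
  rewrite big_distrl /=. apply: leq_sum => f _.
  rewrite /Ycond /A /P /m /k.
  case: (allz f (Ag g)) => //=.
  by rewrite mul1n; apply: ind_pow.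
have H2 := gen_rel q' dAP.
have H3 := @succ_pow_N q #|P| isT.
have HP : #|P| %/ q <= k * k %/ q.
  apply: leq_div2r; apply: leq_trans (PS_card S).
  apply: subset_leq_card; exact: subsetDl.
have H4 : 3 ^ (#|P| %/ q).+1 <= 3 ^ (k * k %/ q).+1 by apply: leq_pexp2l.
have Hq : 0 < q ^ #|P| by rewrite expn_gt0.
have H5 : (\sum_(f : Omega) Ycond g S f) * 2 ^ m <= 3 ^ (k * k %/ q).+1 * W0 q' A.
  rewrite -(leq_pmul2r Hq).
  apply: (leq_trans (leq_mul H1 (leqnn _))).
  rewrite H2 [X in _ <= X]mulnAC.
  apply: leq_mul => //. apply: (leq_trans H3).
  by apply: leq_mul.
have H6 := Hthr sS kn.
have H3p : 0 < 3 ^ (k * k %/ q).+1 by rewrite expn_gt0.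
rewrite -(leq_pmul2l H3p).
apply: leq_trans H5.
rewrite mulnCA. apply: leq_mul => //. by rewrite mulnC.
Qed.

Lemma card_le_n (S : {set 'I_n}) : #|S| <= n.
Proof. by apply: leq_trans (max_card _) _; rewrite card_ord. Qed.

Lemma sumY g :
  2 * (\sum_(S : {set 'I_n} | s < #|S|) \sum_(f : Omega) Ycond g S f) <= W0 q' (Ag g).
Proof.
set F := fun S : {set 'I_n} => \sum_(f : Omega) Ycond g S f.
set W := W0 q' (Ag g).
rewrite (partition_big (fun S : {set 'I_n} => (inord #|S| : 'I_n.+1)) predT) //=.
have Hk : forall k : 'I_n.+1,
    2 * n.+1 * (\sum_(S : {set 'I_n} | (s < #|S|) && (inord #|S| == k)) F S) <= W.
  move=> k.
  have Hnk : 0 < n ^ k by rewrite expn_gt0 n0.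
  rewrite -(leq_pmul2r Hnk).
  apply: (@leq_trans (\sum_(S : {set 'I_n} | #|S| == k) W)).
    rewrite mulnAC big_distrr /=.
    rewrite [X in _ <= X](bigID (fun S : {set 'I_n} => s < #|S|)) /=.
    apply: leq_trans (leq_addr _ _).
    apply: (@leq_trans (\sum_(S : {set 'I_n} | (#|S| == k) && (s < #|S|)) F S * (2 * n.+1 * n ^ #|S|))).
      rewrite (eq_bigl (fun S : {set 'I_n} => (#|S| == k) && (s < #|S|))); last first.
        move=> S; rewrite andbC; congr (_ && _).
        have Hs : #|S| < n.+1 by rewrite ltnS card_le_n.
        apply/eqP/eqP => [<-|E]; first by rewrite inordK.
        by apply: val_inj; rewrite /= inordK.
      apply: leq_sum => S /andP [/eqP -> _]. by rewrite mulnC.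
    apply: leq_sum => S /andP [_ sS]. exact: Y_bound.
  rewrite sum_nat_const.
  have -> : #|[pred S : {set 'I_n} | #|S| == k]| = 'C(n, k).
    by rewrite -[n in 'C(n, _)]card_ord -card_draws cardsE.
  rewrite mulnC; apply: leq_mul => //; exact: bin_le_exp.
have : 2 * n.+1 * (\sum_(k : 'I_n.+1) \sum_(S : {set 'I_n} | (s < #|S|) && (inord #|S| == k)) F S)
        <= n.+1 * W.
  rewrite big_distrr /=.
  apply: (@leq_trans (\sum_(k : 'I_n.+1) W)); first by apply: leq_sum => k _; exact: Hk.
  by rewrite sum_nat_const card_ord.
rewrite -mulnA mulnCA leq_pmul2l //.
Qed.

Lemma bad_le g (f : Omega) :
  allz f (Ag g) * bad f <= \sum_(S : {set 'I_n} | s < #|S|) Ycond g S f.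
Proof.
case Ha: (allz f (Ag g)); rewrite ?mul0n // mul1n.
case Hb: (bad f) => //; move/existsP: Hb => [S /andP [sS HS]].
rewrite (bigD1 S) //= /Ycond Ha /=.
have H1 := zeros_diff f (PS S) (Ag g).
have H2 := Ag_card g.
have -> : thr #|S| - #|LT| <= zeros f (PS S :\: Ag g) by lia.
by [].
Qed.

Lemma sum_good g :
  W0 q' (Ag g) <= 2 * \sum_(f : Omega) allz f (Ag g) * ~~ bad f.
Proof.
have E : W0 q' (Ag g) = \sum_(f : Omega) allz f (Ag g) * bad f
                        + \sum_(f : Omega) allz f (Ag g) * ~~ bad f.
  rewrite -big_split /= -Zeq; apply: eq_bigr => f _.
  by case: (bad f); rewrite /= ?muln1 ?muln0 ?addn0.
have H1 : \sum_(f : Omega) allz f (Ag g) * bad f <=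
          \sum_(S : {set 'I_n} | s < #|S|) \sum_(f : Omega) Ycond g S f.
  rewrite exchange_big /=; apply: leq_sum => f _; exact: bad_le.
have H2 := sumY g.
lia.
Qed.

Lemma exists_good : exists f : Omega,
  ~~ bad f /\ B ^ t <= 2 * q ^ #|LT| * #|[set g | allz f (Ag g)]|.
Proof.
set X := fun f : Omega => ~~ bad f * #|[set g | allz f (Ag g)]|.
have Hsum : B ^ t * q ^ #|{: D}| <= \sum_(f : Omega) 2 * q ^ #|LT| * X f.
  rewrite -big_distrr /=.
  have -> : \sum_(f : Omega) X f = \sum_(f : Omega) \sum_(g : {ffun 'I_t -> 'I_B}) allz f (Ag g) * ~~ bad f.
    apply: eq_bigr => f _; rewrite /X -sum1_card big_distrr /= big_mkcond /=.
    apply: eq_bigr => g _; rewrite inE; by case: (allz f (Ag g)); case: (bad f).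
  rewrite exchange_big /= big_distrr /=.
  have -> : B ^ t * q ^ #|{: D}| = \sum_(g : {ffun 'I_t -> 'I_B}) q ^ #|{: D}|.
    by rewrite sum_nat_const card_ffun !card_ord.
  apply: leq_sum => g _.
  rewrite -mulnA mulnCA.
  apply: (@leq_trans (q ^ #|LT| * W0 q' (Ag g))); last by rewrite leq_mul2l sum_good orbT.
  rewrite -(W0_card q' (Ag g)) [X in _ <= X]mulnC; apply: leq_mul => //.
  apply: leq_pexp2l => //; exact: Ag_card.
case: (boolP [exists f : Omega, ~~ bad f && (B ^ t <= 2 * q ^ #|LT| * #|[set g | allz f (Ag g)]|)]).
  by move=> /existsP [f /andP [H1 H2]]; exists f.
move=> /existsPn Hn.
have Hlt : forall f : Omega, 2 * q ^ #|LT| * X f <= (B ^ t).-1.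
  move=> f; move: (Hn f); rewrite /X.
  case: (bad f) => /=; rewrite ?muln0 ?mul0n // mul1n => H.
  rewrite -ltnNge in H; lia.
have H : \sum_(f : Omega) 2 * q ^ #|LT| * X f <= \sum_(f : Omega) (B ^ t).-1.
  by apply: leq_sum => f _; exact: Hlt.
rewrite sum_nat_const card_ffun !card_ord in H.
have H3 := leq_trans Hsum H.
have H4 : 0 < B ^ t by rewrite expn_gt0 B0.
have H5 : 0 < q ^ #|{: D}| by rewrite expn_gt0.
move: H3 H4 H5; rewrite -subn1 mulnBr muln1 [q ^ _ * _]mulnC.
move: (B ^ t * q ^ #|{: D}|) (q ^ #|{: D}|) => a b; lia.
Qed.

End Core.

Lemma card_cover (T U : finType) (P : pred T) (Q : U -> pred T) (Ss : seq U) :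
  (forall x, P x -> has (fun S => Q S x) Ss) ->
  #|[set x | P x]| <= \sum_(S <- Ss) #|[set x | Q S x]|.
Proof.
elim: Ss P => [|S Ss IH] P HP.
  rewrite big_nil leqn0 cards_eq0; apply/eqP/setP => x; rewrite !inE.
  by apply/negP => /HP.
rewrite big_cons.
have H : [set x | P x] \subset [set x | Q S x] :|: [set x | P x && ~~ Q S x].
  apply/subsetP => x; rewrite !inE => ->; by case: (Q S x).
apply: (leq_trans (subset_leq_card H)); apply: (leq_trans (leq_card_setU _ _)).
rewrite leq_add2l; apply: IH => x /andP [Px nQ].
by move: (HP x Px) => /=; rewrite (negbTE nQ).
Qed.

Section Agg.
Variables (n q' t B s : nat) (v : 'I_t -> 'I_B -> 'I_n) (thr : nat -> nat).
Local Notation q := q'.+1.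
Local Notation D := ('I_n * 'I_n)%type.
Local Notation Omega := {ffun D -> 'I_q}.
Hypothesis vinj : forall i, injective (v i).
Hypothesis vdist : forall i j b c, v i b = v j c -> i = j.

Lemma key_sym (x y : 'I_n) : x != y -> key x y = key y x.
Proof.
rewrite /key => nxy; case: (ltngtP x y) => H //.
by move/val_inj: H => E; rewrite E eqxx in nxy.
Qed.

Definition Kg (g : {ffun 'I_t -> 'I_B}) : {set 'I_n} := [set v i (g i) | i : 'I_t].

Lemma Kg_clique (f : Omega) g : allz f (Ag v g) -> is_clique (gedge f) (Kg g).
Proof.
move=> /forall_inP Ha x y /imsetP [i _ ->] /imsetP [j _ ->] nxy.
rewrite /gedge nxy /=.
have nij : i != j by apply: contra nxy => /eqP ->.
case: (ltngtP i j) => [ij|ji|/val_inj E]; last by rewrite E eqxx in nij.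
- apply: Ha; apply/imsetP; exists (i, j) => //; by rewrite inE.
- rewrite key_sym //; apply: Ha; apply/imsetP; exists (j, i) => //; by rewrite inE.
Qed.

Lemma count_in (S : {set 'I_n}) :
  #|[set g : {ffun 'I_t -> 'I_B} | Kg g \subset S]| <= #|S| ^ t.
Proof.
pose phi (g : {ffun 'I_t -> 'I_B}) : {ffun 'I_t -> 'I_n} := [ffun i => v i (g i)].
have phiinj : injective phi.
  move=> g1 g2 E; apply/ffunP => i.
  have := congr1 (fun h : {ffun 'I_t -> 'I_n} => h i) E; rewrite /phi !ffunE.
  exact: vinj.
rewrite -(card_imset _ phiinj).
rewrite -[t in _ ^ t]card_ord -card_ffun_on.
apply: subset_leq_card; apply/subsetP => h /imsetP [g]; rewrite inE => Hg ->.
apply/ffun_onP => i; rewrite /phi ffunE.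
apply: (subsetP Hg); apply/imsetP; by exists i.
Qed.

Lemma agg_count (f : Omega) (Ss : seq {set 'I_n}) :
  (forall K, is_clique (gedge f) K -> exists2 S, S \in Ss & (K \subset S) && (#|S| <= s)) ->
  #|[set g | allz f (Ag v g)]| <= size Ss * s ^ t.
Proof.
move=> HK.
have Hc : #|[set g | allz f (Ag v g)]| <=
    \sum_(S <- Ss) #|[set g | (Kg g \subset S) && (#|S| <= s)]|.
  apply: (@card_cover _ _ (fun g => allz f (Ag v g)) (fun (S : {set 'I_n}) g => (Kg g \subset S) && (#|S| <= s))).
  move=> g /Kg_clique /HK [S SS HS]; apply/hasP; by exists S.
apply: (leq_trans Hc).
rewrite -sum1_size big_distrl /=; apply: leq_sum => S _; rewrite mul1n.
case: (leqP #|S| s) => HS.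
  apply: (leq_trans _ (expn_monol' t HS)).
  apply: (leq_trans _ (count_in S)); apply: subset_leq_card; apply/subsetP => g.
  by rewrite !inE => /andP [].
rewrite (_ : [set _ | _] = set0) ?cards0 //; apply/setP => g; rewrite !inE.
by rewrite andbF.
Qed.

Lemma edges_eq (f : Omega) (S : {set 'I_n}) :
  induced_edges (gedge f) S = zeros f (PS S).
Proof.
rewrite /induced_edges /zeros; apply: eq_card => [[x y]]; rewrite !inE /=.
rewrite /gedge /key.
case: (ltnP x y) => H; rewrite ?andbF ?andbT //=.
have -> : x != y by rewrite neq_ltn H.
by rewrite andbA.
Qed.

End Agg.

Lemma LT_card t : 2 * #|LT t| <= t * t.
Proof.
pose sw (p : 'I_t * 'I_t) := (p.2, p.1).
have swinj : injective sw by move=> [a b] [c d] [-> ->].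
have Hd : [disjoint LT t & sw @: LT t].
  rewrite -setI_eq0; apply/eqP/setP => [[a b]]; rewrite !inE /=.
  apply/negP => /andP [ab /imsetP [[c d]]]; rewrite inE /= => cd [E1 E2].
  subst; lia.
have := cardsUI (LT t) (sw @: LT t).
rewrite (disjoint_setI0 Hd) cards0 addn0 card_imset // => E.
rewrite mul2n -addnn -E.
apply: (@leq_trans #|[set: 'I_t * 'I_t]|); first by apply: subset_leq_card; apply: subsetT.
by rewrite cardsT card_prod card_ord.
Qed.

Lemma bin2_mul k : 'C(k, 2) * 2 = k * k.-1.
Proof.
elim: k => [|k IH] //.
rewrite binS bin1 mulnDl IH /=. case: k IH => //= k _. lia.
Qed.

Lemma pow_ge l : 8 <= l -> 24 * l + 32 <= 2 ^ l.
Proof.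
elim: l => [|l IH] // H.
case: (ltngtP l 7) => H7.
- lia.
- have := IH H7. rewrite expnS. lia.
- by subst.
Qed.

Lemma Hthr_spec (M L k : nat) : 0 < M -> L <= M * M -> 8 * M * M < k ->
  2 * (2 ^ M).+1 * (2 ^ M) ^ k * 3 ^ ((k * k) %/ M).+1 <= 2 ^ ((16 * 'C(k, 2)) %/ M - L).
Proof.
move=> M0 LM kM.
set K := (k * k) %/ M.
have HK : K * M <= k * k by apply: leq_divM.
have H1 : (2 ^ M).+1 <= 2 ^ M.+1 by rewrite expnS; have := expn_gt0 2 M; lia.
have H2 : (2 ^ M) ^ k = 2 ^ (M * k) by rewrite expnM.
have H3 : 3 ^ K.+1 <= 2 ^ (2 * K.+1).
  rewrite expnM; apply: expn_monol'. done.
have H4 : 2 * (2 ^ M).+1 * (2 ^ M) ^ k * 3 ^ K.+1 <= 2 ^ (1 + M.+1 + M * k + 2 * K.+1).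
  rewrite !expnD expn1 H2; apply: leq_mul; last exact: H3.
  apply: leq_mul => //; apply: leq_mul => //.
apply: (leq_trans H4); apply: leq_pexp2l => //.
have HC : 16 * 'C(k, 2) = 8 * (k * k.-1) by rewrite -bin2_mul; lia.
rewrite HC.
suff : (1 + M.+1 + M * k + 2 * K.+1 + L) * M <= 8 * (k * k.-1).
  rewrite -leq_divRL //; lia.
have E1 : (1 + M.+1 + M * k + 2 * K.+1 + L) * M
          = M * M + 4 * M + M * M * k + 2 * (K * M) + L * M.
  nia.
rewrite E1.
have E2 : L * M <= M * M * M by apply: leq_mul.
have Hk1 : 8 * (M * M) + 1 <= k by lia.
have F1 : k * (8 * (M * M) + 1) <= k * k by apply: leq_mul.
have F4 : M <= M * M by rewrite -{1}(muln1 M); apply: leq_mul => //.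
have HMk : M <= k by lia.
have F2 : M * M * M <= M * M * k by apply: leq_mul => //.
have F3 : M * M <= M * M * k by rewrite -{1}(muln1 (M * M)); apply: leq_mul => //; lia.
have F5 : k <= M * M * k by rewrite -{1}(mul1n k); apply: leq_mul => //; lia.
have -> : k * k.-1 = k * k - k by rewrite -subn1 mulnBr muln1.
have F6 : k * (8 * (M * M) + 1) = 8 * (M * M * k) + k by lia.
rewrite F6 in F1.
move: HK E2 F1 F2 F3 F4 F5 Hk1.
move: (K * M) (L * M) (M * M * M) (M * M * k) (k * k) (M * M) => a b c d x p.
lia.
Qed.

Lemma final_num (M l t tau L sz : nat) : t * l = M -> 2 * L <= t * t -> tau <= l ->
  24 * l + 32 <= M -> 0 < l -> M = 2 ^ l ->
  2 ^ ((M - tau) * t) <= 2 * M ^ L * (sz * (2 ^ (2 * l + 3)) ^ t) ->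
  exists E, 3 * (M * M) <= 8 * (l * E) /\ 2 ^ E <= sz.
Proof.
move=> tl HL taul Ml l0 M2 H.
set X := 1 + l * L + (2 * l + 3) * t.
set E := (M - tau) * t - X.
have EQ1 : l * E = l * ((M - tau) * t) - l * X by rewrite mulnBr.
have EQ2 : l * ((M - tau) * t) = M * M - tau * M.
  by rewrite mulnC -mulnA tl mulnBl.
have EQ3 : l * X = l + l * l * L + 2 * (l * M) + 3 * M.
  rewrite /X -tl; nia.
have F1 : 2 * (l * l * L) <= M * M.
  have : l * l * (2 * L) <= l * l * (t * t) by apply: leq_mul.
  rewrite -tl; nia.
have F2 : tau * M <= l * M by apply: leq_mul.
have F3 : 24 * (l * M) + 32 * M <= M * M.
  have := leq_mul Ml (leqnn M); by rewrite mulnDl -mulnA.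
have F4 : l <= M by lia.
have Hmain : 3 * (M * M) <= 8 * (l * E).
  rewrite EQ1 EQ2 EQ3.
  move: F1 F2 F3 F4.
  move: (l * l * L) (tau * M) (l * M) (M * M) => U R Q P. lia.
exists E; split => //.
have XE : X <= (M - tau) * t.
  have HMM : 0 < M * M by rewrite muln_gt0 andbb; lia.
  have : 0 < l * E by move: Hmain HMM; move: (l * E) (M * M) => a b; lia.
  rewrite /E; case: (leqP X ((M - tau) * t)) => // HX.
  have -> : (M - tau) * t - X = 0 by lia.
  by rewrite muln0.
have HR : 2 * M ^ L * (sz * (2 ^ (2 * l + 3)) ^ t) = 2 ^ X * sz.
  rewrite /X M2 -!expnM !expnD expn1 mulnC.
  by rewrite mulnC [sz * _]mulnC mulnA.
rewrite HR in H.
have : 2 ^ E * 2 ^ X <= sz * 2 ^ X.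
  by rewrite -expnD /E subnK // [sz * _]mulnC.
by rewrite leq_pmul2r // expn_gt0.
Qed.

Lemma vlt t B n (H : t * B = n) (i : 'I_t) (b : 'I_B) : i * B + b < n.
Proof.
rewrite -H; apply: (@leq_trans (i.+1 * B)).
  by rewrite mulSn [B + _]addnC ltn_add2l.
by rewrite leq_mul2r ltn_ord orbT.
Qed.

Definition vmap t B n (H : t * B = n) (i : 'I_t) (b : 'I_B) : 'I_n := Ordinal (vlt H i b).

Lemma vmap_inj t B n (H : t * B = n) i : injective (vmap H i).
Proof.
move=> b c /(congr1 val) /= E; apply: val_inj => /=; lia.
Qed.

Lemma gedge_simple n q' (f : {ffun 'I_n * 'I_n -> 'I_q'.+1}) : simple_graph (gedge f).
Proof.
split.
- move=> x y; rewrite /gedge eq_sym; case: (boolP (y != x)) => //= H.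
  by rewrite key_sym // eq_sym.
- by move=> x; rewrite /gedge eqxx.
Qed.

Lemma main_nat (j : nat) : 3 <= j ->
  let l := 2 ^ j in let M := 2 ^ l in
  exists e : rel 'I_(2 ^ M), simple_graph e /\
   (forall S : {set 'I_(2 ^ M)}, 2 ^ (2 * l + 3) < #|S| ->
       induced_edges e S * M < 16 * 'C(#|S|, 2)) /\
   (forall Ss : seq {set 'I_(2 ^ M)},
      (forall K, is_clique e K -> exists2 S, S \in Ss & (K \subset S) && (#|S| <= 2 ^ (2 * l + 3))) ->
      exists E, 3 * (M * M) <= 8 * (l * E) /\ 2 ^ E <= size Ss).
Proof.
move=> j3 l M.
have jl : j < l by apply: ltn_expl.
have l8 : 8 <= l by rewrite /l (_ : 8 = 2 ^ 3) // leq_exp2l.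
have lM : l < M by apply: ltn_expl.
have M0 : 0 < M by rewrite expn_gt0.
set tau := l - j.
set t := 2 ^ tau.
set B := 2 ^ (M - tau).
set s := 2 ^ (2 * l + 3).
have tB : t * B = 2 ^ M by rewrite -expnD; congr (2 ^ _); lia.
have tlM : t * l = M by rewrite /t /l /M -expnD; congr (2 ^ _); lia.
have tM : t <= M by rewrite /t /M leq_exp2l //; lia.
set q' := M.-1.
have qM : q'.+1 = M by rewrite /q' prednK.
set thr := fun k => (16 * 'C(k, 2)) %/ q'.+1.
set v := vmap tB.
have LTc := LT_card t.
have LM : #|LT t| <= M * M by have := leq_mul tM tM; lia.
have Hthr : forall k, s < k -> k <= 2 ^ M ->
    2 * (2 ^ M).+1 * (2 ^ M) ^ k * 3 ^ ((k * k) %/ q'.+1).+1 <= 2 ^ (thr k - #|LT t|).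
  move=> k sk kn; rewrite /thr qM; apply: Hthr_spec => //.
  move: sk; rewrite /s expnD expnM mulnC. rewrite -/M.
  have -> : 2 ^ 3 = 8 by []. 
  rewrite -expnM [2 * l]mulnC expnM -/M => H.
  have : M ^ 2 = M * M by rewrite expnS expn1.
  lia.
have n0 : 0 < 2 ^ M by rewrite expn_gt0.
have B0 : 0 < B by rewrite expn_gt0.
have [f [nbad Hf]] := exists_good v n0 B0 Hthr.
exists (gedge f); split; first exact: gedge_simple.
split.
  move=> S sS.
  move/existsPn: nbad => /(_ S); rewrite sS /= -ltnNge => Hz.
  rewrite edges_eq.
  move: Hz; rewrite /thr qM => Hz.
  have : (zeros f (PS S)).+1 * M <= 16 * 'C(#|S|, 2) by rewrite -leq_divRL.
  rewrite mulSn => H; apply: leq_trans H; by rewrite addnC -addn1 leq_add2l.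
move=> Ss HSs.
have HX := agg_count (fun i => @vmap_inj _ _ _ tB i) HSs.
have H1 : B ^ t <= 2 * q'.+1 ^ #|LT t| * (size Ss * s ^ t).
  apply: (leq_trans Hf); by rewrite leq_mul2l HX orbT.
rewrite qM /B -expnM in H1.
apply: (final_num tlM LTc _ _ _ _ H1) => //.
- by rewrite /tau; lia.
- exact: pow_ge.
- by rewrite /l expn_gt0.
Qed.

End Comb.

Import Comb.

Lemma INR_expn2 (m : nat) : INR (expn 2 m) = (2 ^ m)%R.
Proof. by rewrite expn_Npow pow_INR. Qed.

Lemma ln2_pos : (0 < ln 2)%R.
Proof. rewrite -ln_1; apply: ln_increasing; lra. Qed.

Lemma exp_mono_le (x y : R) : (x <= y)%R -> (exp x <= exp y)%R.
Proof.
move=> H; case: (Rle_lt_or_eq _ _ H) => [H'|->]; last lra.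
by apply: Rlt_le; apply: exp_increasing.
Qed.

Lemma log2_pow (m : nat) : log2 (INR (expn 2 m)) = INR m.
Proof.
rewrite /log2 INR_expn2 ln_pow; last lra.
have H := ln2_pos.
field; lra.
Qed.

Lemma Un_cv_inv : Un_cv (fun n => (1 / INR n)%R) 0%R.
Proof.
move=> eps Heps.
have [N HN] := INR_archimed eps 1 Heps.
exists N.+1 => n Hn; rewrite /R_dist Rminus_0_r.
have HNpos : (0 < INR N)%R.
  case: N HN {Hn} => [|N] HN; first by rewrite Rmult_0_l in HN; lra.
  by apply: lt_0_INR; apply/ltP.
have Hn' : (INR N <= INR n)%R by apply: le_INR; apply/leP; apply: ltnW; apply/leP.
have Hnpos : (0 < INR n)%R by lra.
rewrite Rabs_right; last first.
  apply: Rle_ge; apply: Rmult_le_pos; [lra | apply: Rlt_le; apply: Rinv_0_lt_compat; lra].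
apply: (Rle_lt_trans _ (1 / INR N)).
  apply: Rmult_le_compat_l; [lra|]. apply: Rinv_le_contravar; lra.
apply: (Rmult_lt_reg_r (INR N)) => //.
have -> : (1 / INR N * INR N = 1)%R by field; lra.
lra.
Qed.

Definition Good (n : nat) (e : rel 'I_n) : Prop :=
  forall rho : R, (16 / log2 (INR n) <= rho)%R ->
  forall Ss : seq {set 'I_n}, dense_aggregator e rho Ss ->
  (Rpower (INR n) (3 * log2 (INR n) / (8 * log2 (log2 (INR n)))) / 1 <= INR (size Ss))%R.

Lemma INR_lt_nat (a b : nat) : (INR a < INR b)%R -> (a < b)%N.
Proof. move=> H; apply/ltP; exact: INR_lt. Qed.

Lemma good_exists (j : nat) : (3 <= j)%N ->
  exists e : rel 'I_(expn 2 (expn 2 (expn 2 j))), simple_graph e /\ Good _ e.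
Proof.
move=> j3; have := Comb.main_nat j3; rewrite /=.
set l := expn 2 j; set M := expn 2 l.
move=> [e [se [Hd Hc]]].
exists e; split => // rho Hrho Ss [Hcov Hdense].
have LM : log2 (INR (expn 2 M)) = INR M := log2_pow M.
have Ll : log2 (INR M) = INR l := log2_pow l.
rewrite LM Ll in Hrho |- *.
have M0 : (0 < M)%N by rewrite expn_gt0.
have l0 : (0 < l)%N by rewrite expn_gt0.
have RM0 : (0 < INR M)%R by apply: lt_0_INR; apply/ltP.
have Rl0 : (0 < INR l)%R by apply: lt_0_INR; apply/ltP.
have Hcov' : forall K, is_clique e K ->
    exists2 S, S \in Ss & (K \subset S) && (#|S| <= expn 2 (2 * l + 3))%N.
  move=> K HK; have [S SS KS] := Hcov K HK; exists S => //; rewrite KS /=.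
  rewrite leqNgt; apply/negP => Hs.
  have H1 := Hd S Hs.
  have [_ Hden] := Hdense S SS.
  have H2 : (2 <= #|S|)%N.
    apply: leq_trans Hs; by rewrite ltnS expn_gt0.
  rewrite /density H2 in Hden.
  have HC : (0 < INR 'C(#|S|, 2))%R by apply: lt_0_INR; apply/ltP; rewrite bin_gt0.
  have H3 : (16 / INR M <= INR (induced_edges e S) / INR 'C(#|S|, 2))%R by lra.
  have H4 : (16 * INR 'C(#|S|, 2) <= INR (induced_edges e S) * INR M)%R.
    have H5 := Rmult_le_compat_r (INR M * INR 'C(#|S|, 2)) _ _ (Rlt_le _ _ (Rmult_lt_0_compat _ _ RM0 HC)) H3.
    have E1 : (16 / INR M * (INR M * INR 'C(#|S|, 2)) = 16 * INR 'C(#|S|, 2))%R by field; lra.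
    have E2 : (INR (induced_edges e S) / INR 'C(#|S|, 2) * (INR M * INR 'C(#|S|, 2))
               = INR (induced_edges e S) * INR M)%R by field; lra.
    lra.
  have H6 : (INR (induced_edges e S * M) < INR (16 * 'C(#|S|, 2)))%R.
    by apply: lt_INR; apply/ltP.
  rewrite !mulnE !mult_INR in H6.
  have E16 : (INR 16 = 16)%R by simpl; ring.
  rewrite E16 in H6; lra.
have [E [HE1 HE2]] := Hc Ss Hcov'.
rewrite /Rpower Rdiv_1_r.
have Hln : ln (INR (expn 2 M)) = (INR M * ln 2)%R.
  by rewrite INR_expn2 ln_pow; last lra.
rewrite Hln.
have Hsz : (INR (expn 2 E) <= INR (size Ss))%R by apply: le_INR; apply/leP.
apply: Rle_trans Hsz.
rewrite INR_expn2.
have -> : (2 ^ E = exp (INR E * ln 2))%R.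
  by rewrite -exp_pow_nat exp_ln //; lra.
apply: exp_mono_le.
have HE : (3 * (INR M * INR M) <= 8 * (INR l * INR E))%R.
  have := le_INR _ _ (elimT leP HE1).
  rewrite !mulnE !mult_INR.
  have -> : (INR 3 = 3)%R by simpl; ring.
  have -> : (INR 8 = 8)%R by simpl; ring.
  done.
have Hl2 := ln2_pos.
have -> : (3 * INR M / (8 * INR l) * (INR M * ln 2) = (3 * (INR M * INR M)) / (8 * INR l) * ln 2)%R.
  by field; lra.
apply: Rmult_le_compat_r; first lra.
apply: (Rmult_le_reg_r (8 * INR l)); first lra.
have -> : (3 * (INR M * INR M) / (8 * INR l) * (8 * INR l) = 3 * (INR M * INR M))%R.
  by field; lra.
lra.
Qed.
Theorem theorem4p1 :
  exists c : R, (0 < c)%R /\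
  exists F : forall n : nat, rel 'I_n -> Prop,
    (forall n (e : rel 'I_n), F n e -> simple_graph e) /\
    (forall N : nat, exists n : nat, (N <= n)%N /\ exists e : rel 'I_n, F n e) /\
    (* Omega^*: a positive hidden factor h that is sublinear in n,
       valid for all sufficiently large n *)
    exists h : nat -> R,
      (forall n, (0 < h n)%R) /\
      Un_cv (fun n => (h n / INR n)%R) 0%R /\
      exists n0 : nat,
        forall (n : nat) (e : rel 'I_n), (n0 <= n)%N -> F n e ->
        forall rho : R, (c / log2 (INR n) <= rho)%R ->
        forall Ss : seq {set 'I_n}, dense_aggregator e rho Ss ->
          (Rpower (INR n) (3 * log2 (INR n) / (8 * log2 (log2 (INR n))))
             / h n <= INR (size Ss))%R.

Proof.
exists 16%R; split; first lra.
exists (fun n e => simple_graph e /\ Good n e).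
split; first by move=> n e [].
split.
  move=> N; exists (expn 2 (expn 2 (expn 2 (N + 3)))); split.
    apply: (@leq_trans (N + 3)); first exact: leq_addr.
    apply: ltnW; apply: (leq_trans (ltn_expl (N + 3) (isT : 1 < 2))).
    apply: ltnW; apply: (leq_trans (ltn_expl _ (isT : 1 < 2))).
    apply: ltnW; exact: (ltn_expl _ (isT : 1 < 2)).
  have [e He] := @good_exists (N + 3) (leq_addl N 3).
  by exists e.
exists (fun _ => 1%R); split; first by move=> n; lra.
split; first exact: Un_cv_inv.
exists 0%N => n e _ [_ Hg] rho Hrho Ss Hagg.
exact: (Hg rho Hrho Ss Hagg).
Qed.
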